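(* Let $p$ be a prime with $p\equiv 1\pmod 4$ and let $\lambda$ be an integer with $p\nmid\lambda$. Let $a(p):=\#X_\lambda^4(\mathbb F_p)-p^2-1$ be the trace of Frobenius of the Dwork K3 surface $X_\lambda^4$ over $\mathbb F_p$ (with $\lambda$ reduced modulo $p$). Then $$a(p)\equiv \sum_{j=0}^{p-1}\frac{(\tfrac14)_j(\tfrac24)_j(\tfrac34)_j}{j!^3}\,\lambda^{-4j}\pmod p,$$ i.e. $a(p)$ is congruent modulo $p$ to the truncation at $p$ of the period $\pi={}_{3}F_{2}\left(\frac14,\frac24,\frac34;1,1\,\middle|\,\frac{1}{\lambda^4}\right)=\sum_{j\ge0}\frac{(\frac14)_j(\frac24)_j(\frac34)_j}{j!^3}\lambda^{-4j}$ of the surface.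
   Context: $X_\lambda^4$ is the Dwork K3 surface in $\mathbb P^3$ defined by $x_1^4+x_2^4+x_3^4+x_4^4=4\lambda x_1x_2x_3x_4$; $\#X_\lambda^4(\mathbb F_p)$ is its number of $\mathbb F_p$-rational points. $(a)_0=1$ and $(a)_j=a(a+1)\cdots(a+j-1)$. The congruence is in $\mathbb Z_{(p)}$ (the coefficients of the truncated sum are $p$-integral). *)

(* Defs.v *)
From HB Require Import structures.
From mathcomp Require Import all_boot all_order all_algebra all_field.
Set Implicit Arguments. Unset Strict Implicit. Unset Printing Implicit Defensive.
Import Order.TTheory GRing.Theory Num.Theory.
Local Open Scope ring_scope.

(* Normalized representatives of points of P^3(F_p): vectors whose first
   nonzero coordinate equals 1.  These are in bijection with P^3(F_p). *)
Definition proj_normalized (F : finFieldType) (x : {ffun 'I_4 -> F}) : bool :=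
  [exists i : 'I_4, (x i == 1) && [forall j : 'I_4, (j < i)%N ==> (x j == 0)]].

Definition dwork_eq (F : finFieldType) (lam : F) (x : {ffun 'I_4 -> F}) : bool :=
  \sum_(i < 4) x i ^+ 4 == 4%:R * lam * \prod_(i < 4) x i.

Definition dwork_count (p : nat) (lam : int) : nat :=
  #|[set x : {ffun 'I_4 -> 'F_p} | proj_normalized x && dwork_eq (lam%:~R) x]|.

Definition poch (a : rat) (j : nat) : rat := \prod_(k < j) (a + k%:R).

(* Main.v *)
Require Import Defs.
From HB Require Import structures.
From mathcomp Require Import all_boot all_order all_algebra all_field.
From mathcomp Require Import ring zify.
Set Implicit Arguments. Unset Strict Implicit. Unset Printing Implicit Defensive.
Import Order.TTheory GRing.Theory Num.Theory.
Local Open Scope ring_scope.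

Lemma multi4 (R : comNzRingType) (a0 a1 a2 a3 : R) m b :
 (a0^+4 + (a1^+4 + (a2^+4 + a3^+4)))^+m * (a0*(a1*(a2*a3)))^+b =
 \sum_(i1 < m.+1) \sum_(i2 < i1.+1) \sum_(i3 < i2.+1)
   (a0 ^+ (4*(m-i1)+b) * (a1 ^+ (4*(i1-i2)+b) * (a2 ^+ (4*(i2-i3)+b) * a3 ^+ (4*i3+b))))
    *+ ('C(m,i1) * 'C(i1,i2) * 'C(i2,i3)).
Proof.
rewrite exprDn mulr_suml; apply: eq_bigr => i1 _.
rewrite exprDn mulrnAl mulr_sumr mulr_suml -sumrMnl; apply: eq_bigr => i2 _.
rewrite exprDn mulr_sumr -sumrMnl mulr_sumr mulr_suml -sumrMnl; apply: eq_bigr => i3 _.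
rewrite !mulrnAr !mulrnAl -!mulrnA.
congr (_ *+ _); last by rewrite mulnC (mulnC 'C(i1, i2)).
rewrite !exprD !expr0 !exprMn. 
ring.
Qed.

Lemma prod4 (R : comNzRingType) (f : 'I_4 -> R) :
  \prod_(i < 4) f i = f 0 * (f 1 * (f 2 * f 3)).
Proof.
rewrite !big_ord_recl big_ord0 mulr1.
have e1 : lift ord0 ord0 = 1 :> 'I_4 by apply: val_inj.
have e2 : lift ord0 (lift ord0 ord0) = 2 :> 'I_4 by apply: val_inj.
have e3 : lift ord0 (lift ord0 (lift ord0 ord0)) = 3 :> 'I_4 by apply: val_inj.
by rewrite e1 e2 e3.
Qed.

Lemma sum4 (R : comNzRingType) (f : 'I_4 -> R) :
  \sum_(i < 4) f i = f 0 + (f 1 + (f 2 + f 3)).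
Proof.
rewrite !big_ord_recl big_ord0 addr0.
have e1 : lift ord0 ord0 = 1 :> 'I_4 by apply: val_inj.
have e2 : lift ord0 (lift ord0 ord0) = 2 :> 'I_4 by apply: val_inj.
have e3 : lift ord0 (lift ord0 (lift ord0 ord0)) = 3 :> 'I_4 by apply: val_inj.
by rewrite e1 e2 e3.
Qed.

Lemma sum_rev (R : nmodType) N (g : nat -> R) :
  \sum_(b < N.+1) g b = \sum_(m < N.+1) g (N - m)%N.
Proof.
rewrite (reindex_inj rev_ord_inj) /=; apply: eq_bigr => i _.
by rewrite subSS.
Qed.

Lemma group4 (R : nmodType) (h : nat -> R) K :
  (forall m, ~~ (4 %| m)%N -> h m = 0) ->
  \sum_(m < 4 * K) h m = \sum_(j < K) h (4 * j)%N.
Proof.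
move=> H; elim: K => [|K IH]; first by rewrite !big_ord0.
rewrite [RHS]big_ord_recr /= -IH mulnS !addSn add0n !big_ord_recr /=.
rewrite (H (4 * K).+1) ?(H (4 * K).+2) ?(H (4 * K).+3) ?addr0 //;
  apply/negP => /dvdnP [q]; lia.
Qed.

Definition pochG (R : nzRingType) (a : R) j := \prod_(k < j) (a + k%:R).

Definition Pn j := (\prod_(k < j) ((4*k+1)*(4*k+2)*(4*k+3)))%N.

Lemma fact4 j : ((4*j)`! = 4^j * j`! * Pn j)%N.
Proof.
elim: j => [|j IH]; first by rewrite /Pn big_ord0.
rewrite /Pn big_ord_recr /= -/(Pn j).
have -> : (4 * j.+1 = (4 * j).+4)%N by lia.
rewrite factS [((4*j).+3)`!]factS [((4*j).+2)`!]factS [((4*j).+1)`!]factS IH expnS [(j.+1)`!]factS.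
ring.
Qed.

Definition W a := ('C(4*a, 3*a) * 'C(3*a, 2*a) * 'C(2*a, a))%N.

Lemma Wfact j : (W j * j`! ^ 4 = (4*j)`!)%N.
Proof.
have e1 := @bin_fact (4*j) (3*j) ltac:(lia).
have e2 := @bin_fact (3*j) (2*j) ltac:(lia).
have e3 := @bin_fact (2*j) j ltac:(lia).
have E1 : (4*j - 3*j = j)%N by lia.
have E2 : (3*j - 2*j = j)%N by lia.
have E3 : (2*j - j = j)%N by lia.
rewrite E1 in e1; rewrite E2 in e2; rewrite E3 in e3.
rewrite -e1 -e2 -e3 /W; ring.
Qed.

Lemma sum4eq (a b c d k : nat) : (k <= a)%N -> (k <= b)%N -> (k <= c)%N -> (k <= d)%N ->
  (a + b + c + d = 4 * k)%N -> [/\ a = k, b = k, c = k & d = k].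
Proof. move=> *; split; lia. Qed.

Section Core.
Variable p : nat.
Hypothesis pr : prime p.
Local Notation F := 'F_p.
Local Notation n := p.-1.

Lemma p_gt1 : (1 < p)%N. Proof. exact: prime_gt1. Qed.
Lemma pE : p = n.+1. Proof. by rewrite prednK // prime_gt0. Qed.

Lemma natF0 k : (k%:R == 0 :> F) = (p %| k)%N.
Proof. by rewrite (dvdn_pcharf (pchar_Fp pr)). Qed.

Lemma pF0 : p%:R = 0 :> F.
Proof. by apply/eqP; rewrite natF0. Qed.

Lemma nF : n%:R = -1 :> F.
Proof. by apply/eqP; rewrite -subr_eq0 opprK natr1 -pE pF0. Qed.

Lemma fermat (x : F) : x != 0 -> x ^+ n = 1.
Proof.
move=> x0; have := expf_card x; rewrite card_Fp // => h.
have : x * x ^+ n = x * 1 by rewrite -exprS -pE h mulr1.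
exact: mulfI.
Qed.

Definition Psum e := \sum_(y : F) y ^+ e.

Lemma Psum_val e : Psum e = if (0 < e)%N && (n %| e)%N then -1 else 0.
Proof.
rewrite /Psum; case: e => [|e] /=.
  by rewrite (eq_bigr (fun _ => 1)) // sumr_const card_Fp // pF0.
have n0 : (0 < n)%N by rewrite -ltnS -pE p_gt1.
case: ifP => hd.
  rewrite (bigD1 0) //= expr0n /= add0r.
  rewrite (eq_bigr (fun _ => 1)); last first.
    by move=> y y0; rewrite -(divnK hd) mulnC exprM fermat // expr1n.
  by rewrite sumr_const cardC1 card_Fp // nF.
pose rs := enum (predC1 (0 : F)).
have hall : all n.-unity_root rs.
  apply/allP => x; rewrite mem_enum /= => x0.
  by rewrite unity_rootE fermat.
have hu : uniq rs by rewrite enum_uniq.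
have hs : (n <= size rs)%N by rewrite -cardE cardC1 card_Fp.
have := cyclic.has_prim_root n0 hall hu hs.
case/hasP => g _ gp.
have g0 : g != 0 by rewrite (prim_root_eq0 gp) -lt0n.
have ge : g ^+ e.+1 != 1.
  by rewrite -(expr0 g) (eq_prim_root_expr gp) mod0n -/(dvdn n e.+1) hd.
set S := \sum_y _.
have : S = g ^+ e.+1 * S.
  rewrite {1}/S (reindex_inj (mulfI g0)) /= /S mulr_sumr.
  by apply: eq_bigr => y _; rewrite exprMn.
move/eqP; rewrite -{1}[S]mul1r -subr_eq0 -mulrBl mulf_eq0 subr_eq0 eq_sym (negbTE ge).
by move/eqP.
Qed.

Lemma L1 e0 e1 e2 e3 :
  \sum_(x : {ffun 'I_4 -> F}) \prod_(i < 4) x i ^+ nth 0%N [:: e0; e1; e2; e3] i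
  = Psum e0 * (Psum e1 * (Psum e2 * Psum e3)).
Proof.
rewrite -(bigA_distr_bigA (fun (i : 'I_4) (y : F) => y ^+ nth 0%N [:: e0; e1; e2; e3] i)).
by rewrite prod4.
Qed.

Definition sx (x : {ffun 'I_4 -> F}) := \sum_(i < 4) x i ^+ 4.
Definition px (x : {ffun 'I_4 -> F}) := \prod_(i < 4) x i.

Lemma Q_expand m b :
  \sum_(x : {ffun 'I_4 -> F}) sx x ^+ m * px x ^+ b =
  \sum_(i1 < m.+1) \sum_(i2 < i1.+1) \sum_(i3 < i2.+1)
   (Psum (4*(m-i1)+b) * (Psum (4*(i1-i2)+b) * (Psum (4*(i2-i3)+b) * Psum (4*i3+b))))
    *+ ('C(m,i1) * 'C(i1,i2) * 'C(i2,i3)).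
Proof.
rewrite (eq_bigr (fun x : {ffun 'I_4 -> F} => \sum_(i1 < m.+1) \sum_(i2 < i1.+1) \sum_(i3 < i2.+1)
   (\prod_(i < 4) x i ^+ nth 0%N [:: (4*(m-i1)+b)%N; (4*(i1-i2)+b)%N; (4*(i2-i3)+b)%N; (4*i3+b)%N] i)
    *+ ('C(m,i1) * 'C(i1,i2) * 'C(i2,i3)))); last first.
  move=> x _; rewrite /sx /px prod4 sum4 multi4.
  apply: eq_bigr => i1 _; apply: eq_bigr => i2 _; apply: eq_bigr => i3 _.
  by rewrite prod4.
rewrite exchange_big; apply: eq_bigr => i1 _.
rewrite exchange_big; apply: eq_bigr => i2 _.
rewrite exchange_big; apply: eq_bigr => i3 _.
by rewrite sumrMnl L1.
Qed.

Lemma n_gt0 : (0 < n)%N.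
Proof. by rewrite -ltnS -pE p_gt1. Qed.

Lemma PP e0 e1 e2 e3 : (e0 + e1 + e2 + e3 = 4 * n)%N ->
  Psum e0 * (Psum e1 * (Psum e2 * Psum e3)) =
  if [&& e0 == n, e1 == n, e2 == n & e3 == n] then 1 else 0.
Proof.
move=> hs; case: ifP => [/and4P[/eqP-> /eqP-> /eqP-> /eqP->] | hne].
  by rewrite !Psum_val n_gt0 dvdnn /= !mulN1r !opprK.
rewrite !Psum_val.
have hk : forall e, (0 < e)%N && (n %| e)%N -> (n <= e)%N.
  by move=> e /andP[ep /dvdn_leq]; apply.
case c0 : (_ && _); last by rewrite mul0r.
case c1 : (_ && _); last by rewrite mul0r mulr0.
case c2 : (_ && _); last by rewrite mul0r !mulr0.
case c3 : (_ && _); last by rewrite !mulr0.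
move: (hk _ c0) (hk _ c1) (hk _ c2) (hk _ c3) => h0 h1 h2 h3.
have [E0 E1 E2 E3] := sum4eq h0 h1 h2 h3 hs.
by rewrite E0 E1 E2 E3 eqxx in hne.
Qed.


Lemma Qval m b : (m + b = n)%N ->
  \sum_(x : {ffun 'I_4 -> F}) sx x ^+ m * px x ^+ b =
  if (4 %| m)%N then (W (m %/ 4))%:R else 0.
Proof.
move=> hmb; rewrite Q_expand.
have hP : forall (i1 i2 i3 : nat), (i1 <= m)%N -> (i2 <= i1)%N -> (i3 <= i2)%N ->
  (4*(m-i1)+b + (4*(i1-i2)+b) + (4*(i2-i3)+b) + (4*i3+b) = 4 * n)%N.
  by move=> *; lia.
case: ifP => h4; last first.
  apply: big1 => [[i1 hi1]] _; apply: big1 => [[i2 hi2]] _; apply: big1 => [[i3 hi3]] _ /=.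
  rewrite PP ?hP //; case: ifP => [/and4P[/eqP e0 /eqP e1 /eqP e2 /eqP e3]|_]; last by rewrite mul0rn.
  exfalso; move/negbT: h4 => /negP; apply.
  apply/dvdnP; exists (m - i1)%N; lia.
move/dvdnP: (h4) => [a ma0]; have ma : m = (4 * a)%N by lia.
rewrite ma mulKn //; rewrite ma in hP.
have h1 : (3 * a < (4 * a).+1)%N by lia.
rewrite (bigD1 (Ordinal h1)) //= addrC big1 ?add0r; last first.
  move=> [i1 hi1] /eqP ne; apply: big1 => [[i2 hi2]] _; apply: big1 => [[i3 hi3]] _ /=.
  rewrite PP ?hP //; case: ifP => [/and4P[/eqP e0 /eqP e1 /eqP e2 /eqP e3]|_]; last by rewrite mul0rn.
  by exfalso; apply: ne; apply: val_inj => /=; lia.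
have h2 : (2 * a < (3 * a).+1)%N by lia.
rewrite (bigD1 (Ordinal h2)) //= addrC big1 ?add0r; last first.
  move=> [i2 hi2] /eqP ne; apply: big1 => [[i3 hi3]] _ /=.
  rewrite PP ?hP //; try lia; case: ifP => [/and4P[/eqP e0 /eqP e1 /eqP e2 /eqP e3]|_]; last by rewrite mul0rn.
  by exfalso; apply: ne; apply: val_inj => /=; lia.
have h3 : (a < (2 * a).+1)%N by lia.
rewrite (bigD1 (Ordinal h3)) //= addrC big1 ?add0r; last first.
  move=> [i3 hi3] /eqP ne /=.
  rewrite PP ?hP //; try lia; case: ifP => [/and4P[/eqP e0 /eqP e1 /eqP e2 /eqP e3]|_]; last by rewrite mul0rn.
  by exfalso; apply: ne; apply: val_inj => /=; lia.
rewrite PP ?hP //; try lia.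
rewrite ifT; first by rewrite /W.
by apply/and4P; split; apply/eqP; lia.
Qed.

Lemma fact_nd j : (j < p)%N -> ~~ (p %| j`!)%N.
Proof.
elim: j => [|j IH] hj; first by rewrite fact0 dvdn1; apply/eqP => h; move: (prime_gt1 pr); rewrite h.
rewrite factS Euclid_dvdM // negb_or IH ?andbT; last by lia.
apply/negP => /dvdn_leq; lia.
Qed.

Lemma factF j : (j < p)%N -> (j`!)%:R != 0 :> F.
Proof. by move=> hj; rewrite natF0 fact_nd. Qed.

Lemma binF k : (k <= n)%N -> ('C(n, k))%:R = (-1) ^+ k :> F.
Proof.
elim: k => [|k IH] hk; first by rewrite bin0 expr0.
have h := binS n k; rewrite -pE in h.
have : ('C(p, k.+1))%:R = 0 :> F.
  apply/eqP; rewrite natF0 prime_dvd_bin //; lia.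
rewrite h natrD IH; last by lia.
by move/eqP; rewrite addr_eq0 => /eqP ->; rewrite exprS mulN1r.
Qed.

Lemma intF0 (z : int) : (z%:~R == 0 :> F) = (p %| z)%Z.
Proof.
case: z => k; first by rewrite -[k%:~R]/(k%:R : F) natF0.
rewrite NegzE mulrNz oppr_eq0 -[(k.+1)%:~R]/((k.+1)%:R : F) natF0.
by [].
Qed.

Lemma Sf (c : F) : \sum_(x : {ffun 'I_4 -> F}) (sx x - c * px x) ^+ n =
  \sum_(b < n.+1) ((-c) ^+ b * (if (4 %| (n - b))%N then (W ((n - b) %/ 4))%:R else 0)) *+ 'C(n, b).
Proof.
under eq_bigr => x _ do rewrite exprDn.
rewrite exchange_big; apply: eq_bigr => [[b hb]] _ /=.
rewrite sumrMnl; congr (_ *+ _).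
rewrite -(@Qval (n - b) b); last by rewrite subnK // -ltnS.
rewrite mulr_sumr; apply: eq_bigr => x _.
by rewrite -mulNr exprMn mulrCA.
Qed.

Hypothesis p4 : (p %% 4 = 1)%N.

Lemma four0 : 4%:R != 0 :> F.
Proof. rewrite natF0; apply/negP => /dvdn_leq h; have := p_gt1; lia. Qed.

Lemma pochF_q (a : nat) j :
  pochG (a%:R / 4%:R : F) j = (\prod_(k < j) (4 * k + a))%:R / 4%:R ^+ j.
Proof.
elim: j => [|j IH]; first by rewrite /pochG !big_ord0 expr0 divr1.
rewrite /pochG big_ord_recr /= -/(pochG _ j) IH big_ord_recr /= natrM exprS.
have h4 := four0.
rewrite natrD natrM; field; by rewrite ?h4 ?expf_neq0.
Qed.

Definition T (lam : F) j := pochG (1/4) j * pochG (2/4) j * pochG (3/4) j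
                    / (j`!)%:R ^+ 3 * lam ^- (4 * j).

Lemma T_Pn (lam : F) j : T lam j = (Pn j)%:R / (4%:R ^+ j) ^+ 3 / (j`!)%:R ^+ 3 * lam ^- (4 * j).
Proof.
rewrite /T.
have -> : (1 / 4 : F) = 1%:R / 4%:R by rewrite mulr1n.
rewrite !pochF_q /Pn !big_split /= !natrM.
congr (_ / _ * _); rewrite -!mulrA; congr (_ * _).
rewrite !mulrA [_ * _^-1 * _]mulrAC.
have h4 := four0; field; by rewrite expf_neq0.
Qed.

Lemma termNZ (lam : F) j : lam != 0 -> (4 * j <= n)%N ->
  ((-(4%:R * lam)) ^+ (n - 4 * j) * (W j)%:R) *+ 'C(n, n - 4 * j) = T lam j.
Proof.
move=> l0 hj.
have jp : (j < p)%N by rewrite pE; lia.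
have f4 := four0; have fj := factF jp.
have hW : (W j)%:R * (j`!)%:R ^+ 3 = 4%:R ^+ j * (Pn j)%:R :> F.
  apply: (mulIf fj); rewrite -mulrA -exprSr -[(j`!)%:R ^+ 4]natrX -natrM Wfact fact4 !natrM natrX.
  by rewrite mulrAC.
have c0 : 4%:R * lam != 0 :> F by rewrite mulf_neq0.
have hc : (4%:R * lam) ^+ (n - 4 * j) * (4%:R * lam) ^+ (4 * j) = 1 :> F.
  by rewrite -exprD subnK // fermat.
have ek : (n - 4 * j = 2 * ((n - 4 * j) %/ 2))%N.
  have := p_gt1; lia.
have s1 : (-1) ^+ (n - 4 * j) = 1 :> F by rewrite ek exprM sqrrN !expr1n.
have sc : (- (4%:R * lam)) ^+ (n - 4 * j) = (4%:R * lam) ^+ (n - 4 * j) :> F.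
  by rewrite exprNn s1 mul1r.
rewrite -mulr_natr binF ?leq_subr // T_Pn s1 mulr1 sc.
have e4 : forall y : F, y ^+ (4 * j) = (y ^+ j) ^+ 4 by move=> y; rewrite mulnC exprM.
have hW' : (W j)%:R = 4%:R ^+ j * (Pn j)%:R / (j`!)%:R ^+ 3 :> F.
  by rewrite -hW mulfK // expf_neq0.
have hc' : (4%:R * lam) ^+ (n - 4 * j) = ((4%:R * lam) ^+ (4 * j))^-1 :> F.
  by apply: (mulIf (expf_neq0 (4 * j) c0)); rewrite hc mulVf // expf_neq0.
rewrite hW' hc' exprMn !e4.
set x := 4%:R ^+ j; set l := lam ^+ j; set f := (j`!)%:R.
have x0 : x != 0 by rewrite expf_neq0.
have lnz : l != 0 by rewrite expf_neq0.
field.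
by rewrite fj x0 lnz.
Qed.

Lemma termZ (lam : F) j : (j < p)%N -> (p <= 4 * j)%N -> T lam j = 0.
Proof.
move=> jp hj; rewrite /T.
have k0j : (n %/ 4 < j)%N by lia.
have -> : pochG (1 / 4 : F) j = 0.
  rewrite /pochG (bigD1 (Ordinal k0j)) //=.
  have -> : (1 / 4 + (n %/ 4)%:R : F) = (1 + 4 * (n %/ 4))%:R / 4%:R.
    have h4 := four0; rewrite natrD natrM; field; exact: h4.
  have -> : (1 + 4 * (n %/ 4) = p)%N by have := p_gt1; lia.
  by rewrite pF0 !mul0r.
by rewrite !mul0r.
Qed.

Lemma Salg (lam : F) : lam != 0 ->
  \sum_(x : {ffun 'I_4 -> F}) (sx x - (4%:R * lam) * px x) ^+ n = \sum_(j < p) T lam j.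
Proof.
move=> l0; rewrite Sf.
set c := 4%:R * lam.
pose g := fun b : nat => ((-c) ^+ b * (if (4 %| (n - b))%N then (W ((n - b) %/ 4))%:R else 0)) *+ 'C(n, b).
rewrite (sum_rev n g).
pose h := fun m : nat => if (m < p)%N then ((-c) ^+ (n - m) * (if (4 %| m)%N then (W (m %/ 4))%:R else 0)) *+ 'C(n, n - m) else 0.
have -> : \sum_(m < n.+1) g (n - m)%N = \sum_(m < 4 * p) h m.
  rewrite (big_ord_widen (4 * p) (fun m => g (n - m)%N)); last by have := p_gt1; lia.
  rewrite big_mkcond; apply: eq_bigr => [[m hm]] _ /=.
  rewrite /h /g -pE; case: ifP => // hmp.
  by rewrite subKn // -ltnS -pE.
rewrite group4; last first.
  by move=> m hm; rewrite /h (negbTE hm) mulr0 mul0rn; case: ifP.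
apply: eq_bigr => [[j hj]] _ /=.
rewrite /h; case: ifP => h4j.
  rewrite (dvdn_mulr j (dvdnn 4)) mulKn // -termNZ //; lia.
by rewrite termZ //; lia.
Qed.

Definition fx (lam : F) (x : {ffun 'I_4 -> F}) := sx x - 4%:R * lam * px x.
Definition sc (t : F) (v : {ffun 'I_4 -> F}) : {ffun 'I_4 -> F} := [ffun i => t * v i].
Definition z0 : {ffun 'I_4 -> F} := [ffun _ => 0].

Lemma fx_sc lam t v : fx lam (sc t v) = t ^+ 4 * fx lam v.
Proof. by rewrite /fx /sx /px !sum4 !prod4 !ffunE; ring. Qed.

Lemma dwork_fx lam x : dwork_eq lam x = (fx lam x == 0).
Proof. by rewrite /dwork_eq /fx subr_eq0. Qed.

Lemma norm_ex (v : {ffun 'I_4 -> F}) : proj_normalized v ->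
  exists i : 'I_4, v i = 1 /\ forall j : 'I_4, (j < i)%N -> v j = 0.
Proof.
move/existsP => [i /andP[/eqP h /forallP H]]; exists i; split=> // j ji.
by apply/eqP; exact: (implyP (H j) ji).
Qed.

Lemma norm_mk (v : {ffun 'I_4 -> F}) (i : 'I_4) : v i = 1 -> (forall j : 'I_4, (j < i)%N -> v j = 0) ->
  proj_normalized v.
Proof.
move=> h H; apply/existsP; exists i; rewrite h eqxx /=.
by apply/forallP => j; apply/implyP => ji; rewrite H.
Qed.

Lemma first_nz (x : {ffun 'I_4 -> F}) : x != z0 ->
  exists i : 'I_4, x i != 0 /\ forall j : 'I_4, (j < i)%N -> x j = 0.
Proof.
move=> xz.
have [k hk] : exists k : 'I_4, x k != 0.
  apply/existsP; apply: contraR xz => /existsPn H.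
  by apply/eqP/ffunP => i; rewrite ffunE; apply/eqP/negPn/H.
have exP : exists k, (k < 4)%N && (x (inord k) != 0).
  by exists (val k); rewrite ltn_ord inord_val.
case: (ex_minnP exP) => m /andP[m4 hm] hmin.
exists (inord m); split => // j ji; apply/eqP; apply/negPn/negP => hj.
have := hmin j; rewrite ltn_ord inord_val hj => /(_ isT).
by rewrite inordK // in ji; lia.
Qed.

Lemma cardZ (lam : F) :
  #|[set x : {ffun 'I_4 -> F} | dwork_eq lam x]| =
  (1 + n * #|[set x : {ffun 'I_4 -> F} | proj_normalized x && dwork_eq lam x]|)%N.
Proof.
set Xs := [set x | _ && _].
rewrite (cardsD1 z0) (_ : z0 \in _ = true); last first.
  by rewrite inE dwork_fx /fx /sx /px sum4 prod4 !ffunE; apply/eqP; ring.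
congr (_ + _)%N.
pose phi := fun u : F * {ffun 'I_4 -> F} => sc u.1 u.2.
have -> : [set x | dwork_eq lam x] :\ z0 = [set phi u | u in setX [set~ (0 : F)] Xs].
  apply/setP => x; rewrite !inE; apply/idP/imsetP.
    case/andP => xz hx; have [i [xi xj]] := first_nz xz.
    exists ((x i), sc (x i)^-1 x); last first.
      by apply/ffunP => k; rewrite /phi /= !ffunE mulrA mulfV // mul1r.
    rewrite !inE /= xi /=; apply/andP; split.
      apply: (@norm_mk _ i); first by rewrite ffunE mulVf.
      by move=> j ji; rewrite ffunE (xj j ji) mulr0.
    by rewrite dwork_fx in hx; rewrite dwork_fx fx_sc (eqP hx) mulr0.
  case => [[t v]]; rewrite !inE /= => /andP[t0 /andP[nv hv]] ->.
  rewrite dwork_fx in hv; rewrite /phi /= dwork_fx fx_sc (eqP hv) mulr0 eqxx andbT.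
  have [i [vi _]] := norm_ex nv.
  apply/negP => /eqP /ffunP /(_ i); rewrite !ffunE vi mulr1 => /eqP.
  by rewrite (negbTE t0).
rewrite card_in_imset; first by rewrite cardsX cardsC1 card_Fp.
move=> [t v] [t' v']; rewrite !inE /= => /andP[t0 /andP[nv _]] /andP[t0' /andP[nv' _]] eq.
have [i [vi vj]] := norm_ex nv; have [i' [vi' vj']] := norm_ex nv'.
have E : forall k, t * v k = t' * v' k.
  by move=> k; have := congr1 (fun f : {ffun 'I_4 -> F} => f k) eq; rewrite /phi /= !ffunE.
have ii : i = i'.
  apply: val_inj; apply/eqP; case: ltngtP => // h; exfalso.
    by have := E i; rewrite vi vj' // mulr1 mulr0; apply/eqP.
  by have := E i'; rewrite vi' vj // mulr1 mulr0 => /eqP; rewrite eq_sym (negbTE t0').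
subst i'.
have tt : t = t' by have := E i; rewrite vi vi' !mulr1.
subst t'; congr (_, _); apply/ffunP => k; exact: (mulfI t0 (E k)).
Qed.

Lemma mainF (lam : F) : lam != 0 ->
  (#|[set x : {ffun 'I_4 -> F} | proj_normalized x && dwork_eq lam x]|%:R : F) - 1
  = \sum_(j < p) T lam j.
Proof.
move=> l0; rewrite -Salg //.
have hZ : (#|[set x : {ffun 'I_4 -> F} | dwork_eq lam x]|%:R : F)
          = - \sum_(x : {ffun 'I_4 -> F}) (fx lam x) ^+ n.
  rewrite -sumr_const big_mkcond /=.
  rewrite (eq_bigr (fun x => 1 - fx lam x ^+ n)); last first.
    move=> x _; rewrite inE dwork_fx; case: eqP => [->|/eqP h].
      by rewrite expr0n eqn0Ngt n_gt0 subr0.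
    by rewrite fermat // subrr.
  rewrite sumrB sumr_const card_ffun card_Fp // card_ord natrX pF0 expr0n /= sub0r.
  by [].
move: hZ; rewrite cardZ natrD natrM nF mulN1r => hZ.
rewrite (_ : \sum_(x : {ffun 'I_4 -> F}) (sx x - 4%:R * lam * px x) ^+ n
           = \sum_(x : {ffun 'I_4 -> F}) (fx lam x) ^+ n) //.
rewrite -[RHS]opprK -hZ; ring.
Qed.

Definition Cong (r : rat) (u : F) :=
  exists z d : int, [/\ coprime `|d| p, r = z%:~R / d%:~R & u = z%:~R / d%:~R].



Lemma copF (d : int) : coprime `|d| p -> d%:~R != 0 :> F.
Proof. by rewrite intF0 coprime_sym prime_coprime. Qed.

Lemma copQ (d : int) : coprime `|d| p -> d%:~R != 0 :> rat.
Proof.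
move=> h; rewrite intr_eq0; apply/negP => /eqP d0; move: h; rewrite d0 /= coprime_sym.
by rewrite /coprime gcdn0; move/eqP => p1; move: (prime_gt1 pr); rewrite p1.
Qed.

Lemma Cong_eq r r' u u' : r = r' -> u = u' -> Cong r' u' -> Cong r u.
Proof. by move=> -> ->. Qed.

Lemma Cong_int z : Cong z%:~R z%:~R.
Proof. by exists z, 1; rewrite !divr1 coprime1n. Qed.

Lemma Cong_nat k : Cong k%:R k%:R.
Proof. exact: (Cong_int k). Qed.

Lemma Cong_add r1 u1 r2 u2 : Cong r1 u1 -> Cong r2 u2 -> Cong (r1 + r2) (u1 + u2).
Proof.
move=> [z1 [d1 [c1 -> ->]]] [z2 [d2 [c2 -> ->]]].
exists (z1 * d2 + z2 * d1), (d1 * d2); split.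
- by rewrite abszM coprimeMl c1 c2.
- rewrite !rmorphD !rmorphM /=; field; apply/andP; split; exact: copQ.
- rewrite !rmorphD !rmorphM /=; field; apply/andP; split; exact: copF.
Qed.

Lemma Cong_mul r1 u1 r2 u2 : Cong r1 u1 -> Cong r2 u2 -> Cong (r1 * r2) (u1 * u2).
Proof.
move=> [z1 [d1 [c1 -> ->]]] [z2 [d2 [c2 -> ->]]].
exists (z1 * z2), (d1 * d2); split.
- by rewrite abszM coprimeMl c1 c2.
- rewrite !rmorphM /=; field; apply/andP; split; exact: copQ.
- rewrite !rmorphM /=; field; apply/andP; split; exact: copF.
Qed.

Lemma Cong_opp r u : Cong r u -> Cong (- r) (- u).
Proof.
move=> [z [d [c -> ->]]]; exists (- z), d; split => //; by rewrite rmorphN mulNr.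
Qed.

Lemma Cong_inv r u : Cong r u -> u != 0 -> Cong r^-1 u^-1.
Proof.
move=> [z [d [c -> ->]]] u0.
have dF := copF c; have dQ := copQ c.
have zF : z%:~R != 0 :> F by move: u0; rewrite mulf_eq0 negb_or => /andP[].
have cz : coprime `|z| p.
  by move: zF; rewrite intF0 coprime_sym prime_coprime // => h; exact: h.
exists d, z; split => //; by rewrite invf_div.
Qed.

Lemma Cong_pow r u k : Cong r u -> Cong (r ^+ k) (u ^+ k).
Proof.
move=> h; elim: k => [|k IH]; first by rewrite !expr0; exact: (Cong_int 1).
by rewrite !exprS; apply: Cong_mul.
Qed.

Lemma Cong_sum (I : finType) (R : I -> rat) (U : I -> F) :
  (forall i, Cong (R i) (U i)) -> Cong (\sum_i R i) (\sum_i U i).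
Proof.
move=> h; apply: (big_ind2 Cong); first exact: (Cong_int 0).
  by move=> *; apply: Cong_add.
by move=> i _; apply: h.
Qed.

Lemma Cong_prod (I : finType) (R : I -> rat) (U : I -> F) :
  (forall i, Cong (R i) (U i)) -> Cong (\prod_i R i) (\prod_i U i).
Proof.
move=> h; apply: (big_ind2 Cong); first exact: (Cong_int 1).
  by move=> *; apply: Cong_mul.
by move=> i _; apply: h.
Qed.

Lemma Cong_final X : Cong X 0 -> exists r : rat, coprime `|denq r| p /\ X = p%:R * r.
Proof.
move=> [z [d [c -> h0]]].
have dF := copF c; have dQ := copQ c.
have : z%:~R = 0 :> F by move: h0 => /esym/eqP; rewrite mulf_eq0 invr_eq0 (negbTE dF) orbF => /eqP.
move/eqP; rewrite intF0 => /dvdzP [q ->].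
exists (q%:~R / d%:~R); split; last first.
  by rewrite rmorphM /= [X in X * _]mulrC -mulrA; congr (_ * _).
set r := q%:~R / d%:~R.
have e : (numq r)%:~R / (denq r)%:~R = q%:~R / d%:~R :> rat by rewrite divq_num_den.
have dn : (denq r)%:~R != 0 :> rat by rewrite intr_eq0 denq_neq0.
have e2 : numq r * d = q * denq r.
  apply: (@intr_inj rat); rewrite !rmorphM /=.
  move: e; move/(congr1 (fun y => y * (denq r)%:~R * d%:~R)).
  by rewrite mulfVK // mulrAC mulfVK // mulrC.
have dv : (denq r %| d)%Z.
  rewrite -(@Gauss_dvdzr _ (numq r)); last by rewrite coprimezE coprime_sym coprime_num_den.
  by apply/dvdzP; exists q; rewrite e2 mulrC.
apply: coprime_dvdl c; exact: dv.
Qed.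

Lemma Cong_quarter (a : nat) : Cong (a%:R / 4) (a%:R / 4).
Proof. by apply: Cong_mul; [exact: Cong_nat | apply: Cong_inv; [exact: Cong_nat | exact: four0]]. Qed.

Lemma final (lam : int) : ~~ ((p:int) %| lam)%Z ->
  exists r : rat, coprime `|denq r|%N p /\
    ((dwork_count p lam)%:~R - (p ^ 2)%:R - 1 : rat)
    - \sum_(j < p) (poch (1/4) j * poch (2/4) j * poch (3/4) j
                    / (j`!)%:R ^+ 3 * (lam%:~R) ^- (4 * j))
    = p%:R * r.
Proof.
move=> hl.
have l0 : (lam%:~R : F) != 0 by rewrite intF0.
apply: Cong_final.
apply: (@Cong_eq _ _ _ (((dwork_count p lam)%:~R - (p ^ 2)%:R - 1 : F)
          - \sum_(j < p) T (lam%:~R) j)) => //.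
  rewrite natrX pF0 expr0n /= subr0 -mainF //.
  by rewrite /dwork_count subrr.
apply: Cong_add; last apply: Cong_opp.
  apply: Cong_add; last exact: Cong_opp (Cong_int 1).
  apply: Cong_add; last exact: Cong_opp (Cong_nat _).
  exact: Cong_int.
apply: Cong_sum => j.
have jp : (j < p)%N := ltn_ord j.
apply: Cong_mul; last first.
  apply: Cong_inv; last by rewrite expf_neq0.
  by apply: Cong_pow; exact: Cong_int.
apply: Cong_mul; last first.
  apply: Cong_inv; last by rewrite expf_neq0 // factF.
  by apply: Cong_pow; exact: Cong_nat.
apply: Cong_mul; first apply: Cong_mul; apply: Cong_prod => k; apply: Cong_add;
  try exact: Cong_nat.
- exact: (Cong_quarter 1).
- exact: (Cong_quarter 2).
- exact: (Cong_quarter 3).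
Qed.
End Core.

Unset Implicit Arguments.
Theorem theorem4 (p : nat) (lam : int) :
  prime p -> (p %% 4 = 1)%N -> ~~ ((p:int) %| lam)%Z ->
  exists r : rat, coprime `|denq r|%N p /\
    ((dwork_count p lam)%:~R - (p ^ 2)%:R - 1 : rat)
    - \sum_(j < p) (poch (1/4) j * poch (2/4) j * poch (3/4) j
                    / (j`!)%:R ^+ 3 * (lam%:~R) ^- (4 * j))
    = p%:R * r.
Proof. by move=> pr p4 hl; apply: final. Qed.
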